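(* Let $N,r\in\mathbb N$ and let $\mathsf A\in\mathbb H^{N\times N}$, $\mathsf B\in\mathbb H^{N\times r}$, $\mathsf C\in\mathbb H^{r\times N}$, $\mathsf D\in\mathbb H^{r\times r}$ be such that the matrix $\begin{pmatrix}\mathsf A&\mathsf B\\\mathsf C&\mathsf D\end{pmatrix}\in\mathbb H^{(N+r)\times(N+r)}$ is unitary. Let $B(x)=\mathsf D+\sum_{n\ge1}P_n(x)\mathsf C\mathsf A^{n-1}\mathsf B$, $x\in\mathcal E$. Then the operator $M_B\big(\sum_nP_nu_n\big)=\sum_n(P_n\odot B)u_n$ is an isometry from $(\mathbf H_2(\mathcal E))^r$ into itself, and the reproducing kernel Hilbert space $\mathcal H(B)$ with kernel $K_B(x,y)=\sum_{n\ge0}\big(P_n(x)\overline{P_n(y)}I_r-(P_n\odot B)(x)((P_n\odot B)(y))^*\big)$ is finite dimensional.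
   Context: For $m\ge0$, $T^m_j=\frac{2(m-j+1)}{(m+1)(m+2)}$, $c_m=\sum_{j=0}^m(-1)^jT^m_j$, $P_m(x)=\frac1{c_m}\sum_{j=0}^mT^m_jx^{m-j}\overline{x}^{\,j}$. $\mathcal E=\{x\in\mathbb H:9x_0^2+x_1^2+x_2^2+x_3^2<1\}$; $(\mathbf H_2(\mathcal E))^r$ is the Hilbert space of functions $\sum_mP_mf_m$, $f_m\in\mathbb H^r$, with $\|f\|^2=\sum_mf_m^*f_m$. $\odot$ is the Cauchy–Kovalevskaya product $f\odot g=CK(f|_{x_0=0}g|_{x_0=0})$, satisfying $P_n\odot\big(\sum_mP_mb_m\big)=\sum_mP_{n+m}b_m$ for matrix coefficients $b_m$. *)

(* Defs.v *)
From HB Require Import structures.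
From mathcomp Require Import all_boot all_order all_algebra.
From mathcomp Require Import all_classical all_reals.
From mathcomp Require Import topology normedtype sequences.
From mathcomp Require Import ring.
Set Implicit Arguments. Unset Strict Implicit. Unset Printing Implicit Defensive.
Import Order.TTheory GRing.Theory Num.Theory.
Import numFieldNormedType.Exports.
Local Open Scope ring_scope.
Local Open Scope classical_set_scope.

Record quat (R : Type) := Quat { q0 : R; q1 : R; q2 : R; q3 : R }.

Module QuatEqChoice.
Definition to_seq (R : Type) (x : quat R) :=
  let: Quat a b c d := x in [:: a; b; c; d].
Definition of_seq (R : Type) (s : seq R) :=
  if s is [:: a; b; c; d] then Some (Quat a b c d) else None.
Lemma to_seqK (R : Type) : pcancel (@to_seq R) (@of_seq R).
Proof. by case. Qed.
End QuatEqChoice.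

HB.instance Definition _ (R : choiceType) := Choice.copy (quat R)
  (pcan_type (@QuatEqChoice.to_seqK R)).

Section QuatRing.
Variable R : comNzRingType.
Local Notation H := (quat R).

Definition qadd (x y : H) :=
  Quat (q0 x + q0 y) (q1 x + q1 y) (q2 x + q2 y) (q3 x + q3 y).
Definition qopp (x : H) := Quat (- q0 x) (- q1 x) (- q2 x) (- q3 x).
Definition qzero : H := Quat 0 0 0 0.
Definition qone : H := Quat 1 0 0 0.
(* Hamilton product, i^2 = j^2 = k^2 = ijk = -1 *)
Definition qmul (x y : H) :=
  let: Quat a1 b1 c1 d1 := x in let: Quat a2 b2 c2 d2 := y in
  Quat (a1 * a2 - b1 * b2 - c1 * c2 - d1 * d2)
       (a1 * b2 + b1 * a2 + c1 * d2 - d1 * c2)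
       (a1 * c2 - b1 * d2 + c1 * a2 + d1 * b2)
       (a1 * d2 + b1 * c2 - c1 * b2 + d1 * a2).

Lemma qaddA : associative qadd.
Proof. by move=> [? ? ? ?] [? ? ? ?] [? ? ? ?]; rewrite /qadd /= !addrA. Qed.
Lemma qaddC : commutative qadd.
Proof. by move=> [a b c d] [e f g h]; rewrite /qadd /= [a + _]addrC
  [b + _]addrC [c + _]addrC [d + _]addrC. Qed.
Lemma qadd0 : left_id qzero qadd.
Proof. by move=> [? ? ? ?]; rewrite /qadd /= !add0r. Qed.
Lemma qaddN : left_inverse qzero qopp qadd.
Proof. by move=> [? ? ? ?]; rewrite /qadd /= !addNr. Qed.

HB.instance Definition _ := GRing.isZmodule.Build H qaddA qaddC qadd0 qaddN.

Lemma qmulA : associative qmul.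
Proof. move=> [? ? ? ?] [? ? ? ?] [? ? ? ?]; rewrite /qmul /=; congr Quat; ring. Qed.
Lemma qmul1 : left_id qone qmul.
Proof. by move=> [? ? ? ?]; rewrite /qmul /=; congr Quat; ring. Qed.
Lemma qmulr1 : right_id qone qmul.
Proof. by move=> [? ? ? ?]; rewrite /qmul /=; congr Quat; ring. Qed.
Lemma qmulDl : left_distributive qmul qadd.
Proof. by move=> [? ? ? ?] [? ? ? ?] [? ? ? ?];
  rewrite /qmul /qadd /=; congr Quat; ring. Qed.
Lemma qmulDr : right_distributive qmul qadd.
Proof. by move=> [? ? ? ?] [? ? ? ?] [? ? ? ?];
  rewrite /qmul /qadd /=; congr Quat; ring. Qed.
Lemma qone_neq0 : qone != 0.
Proof. by apply/eqP => -[] /eqP; rewrite oner_eq0. Qed.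

HB.instance Definition _ := GRing.Zmodule_isNzRing.Build H
  qmulA qmul1 qmulr1 qmulDl qmulDr qone_neq0.

End QuatRing.

Section QuatAnalysis.
Variable R : realType.
Local Notation H := (quat R).

Definition qconj (x : H) : H := Quat (q0 x) (- q1 x) (- q2 x) (- q3 x).
Definition qR (a : R) : H := Quat a 0 0 0.

Definition Tcoef (m j : nat) : R :=
  (2 * ((m - j).+1)%:R) / ((m.+1)%:R * (m.+2)%:R).
Definition ccoef (m : nat) : R := \sum_(j < m.+1) (-1) ^+ j * Tcoef m j.
Definition Pm (m : nat) (x : H) : H :=
  qR (ccoef m)^-1 * \sum_(j < m.+1) qR (Tcoef m j) * x ^+ (m - j) * qconj x ^+ j.

Definition in_ellip (x : H) : bool :=
  9 * q0 x ^+ 2 + q1 x ^+ 2 + q2 x ^+ 2 + q3 x ^+ 2 < 1.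

Definition mxadj (m n : nat) (M : 'M[H]_(m, n)) : 'M[H]_(n, m) :=
  (map_mx qconj M)^T.
Definition unitary (n : nat) (U : 'M[H]_n) : Prop :=
  mxadj U *m U = 1%:M /\ U *m mxadj U = 1%:M.

(* convergence of quaternion sequences: componentwise (equivalently in |.|) *)
Definition qcvg (s : nat -> H) (l : H) : Prop :=
  [/\ (fun n => q0 (s n)) @ \oo --> q0 l, (fun n => q1 (s n)) @ \oo --> q1 l,
      (fun n => q2 (s n)) @ \oo --> q2 l & (fun n => q3 (s n)) @ \oo --> q3 l].

Definition mx_sum_to (m n : nat) (f : nat -> 'M[H]_(m, n)) (L : 'M[H]_(m, n)) : Prop :=
  forall i j, qcvg (fun K => (\sum_(k < K) f k) i j) (L i j).

(* ||f||^2 = sum_m f_m^* f_m  for f = sum_m P_m f_m in (H_2(E))^r *)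
Definition H2_norm2_to (r : nat) (u : nat -> 'cV[H]_r) (s : R) : Prop :=
  mx_sum_to (fun m => mxadj (u m) *m u m) (qR s)%:M.
Definition in_H2 (r : nat) (u : nat -> 'cV[H]_r) : Prop :=
  exists s : R, H2_norm2_to u s.

(* coefficients of B(x) = D + sum_{n>=1} P_n(x) C A^{n-1} B *)
Definition bcoef (N r : nat) (A : 'M[H]_N) (B : 'M[H]_(N, r))
  (C : 'M[H]_(r, N)) (D : 'M[H]_r) (m : nat) : 'M[H]_r :=
  if m is k.+1 then C *m A ^+ k *m B else D.

(* (P_n ⊙ B)(x) = sum_m P_{n+m}(x) b_m  is F *)
Definition PodotB_to (N r : nat) (A : 'M[H]_N) (B : 'M[H]_(N, r))
  (C : 'M[H]_(r, N)) (D : 'M[H]_r) (n : nat) (x : H) (F : 'M[H]_r) : Prop :=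
  mx_sum_to (fun m => Pm (n + m) x *: bcoef A B C D m) F.

Definition KB_to (N r : nat) (A : 'M[H]_N) (B : 'M[H]_(N, r))
  (C : 'M[H]_(r, N)) (D : 'M[H]_r) (x y : H) (K : 'M[H]_r) : Prop :=
  exists F G : nat -> 'M[H]_r,
    [/\ forall n, PodotB_to A B C D n x (F n),
        forall n, PodotB_to A B C D n y (G n) &
        mx_sum_to (fun n => (Pm n x * qconj (Pm n y))%:M - F n *m mxadj (G n)) K].

End QuatAnalysis.

(* Main.v *)
Require Import Defs.
From HB Require Import structures.
From mathcomp Require Import all_boot all_order all_algebra.
From mathcomp Require Import all_classical all_reals.
From mathcomp Require Import topology normedtype sequences.
From mathcomp Require Import ring lra zify.
Set Implicit Arguments. Unset Strict Implicit. Unset Printing Implicit Defensive.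
Import Order.TTheory GRing.Theory Num.Theory.
Import numFieldNormedType.Exports.
Local Open Scope ring_scope.
Local Open Scope classical_set_scope.

Section Q.
Variable R : realType.
Local Notation H := (quat R).
Implicit Types (p q : H) (a b : R).

Lemma qmulE (p q : H) : p * q = qmul p q. Proof. by []. Qed.
Lemma qaddE (p q : H) : p + q = qadd p q. Proof. by []. Qed.
Lemma qoppE (p : H) : - p = qopp p. Proof. by []. Qed.
Lemma q0E : (0 : H) = Quat 0 0 0 0. Proof. by []. Qed.
Lemma q1E : (1 : H) = Quat 1 0 0 0. Proof. by []. Qed.

Definition qN (q : H) : R := q0 q ^+ 2 + q1 q ^+ 2 + q2 q ^+ 2 + q3 q ^+ 2.
Definition qn (q : H) : R := Num.sqrt (qN q).
Definition qdot (p q : H) : R := q0 p * q0 q + q1 p * q1 q + q2 p * q2 q + q3 p * q3 q.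

Lemma qN_ge0 q : 0 <= qN q.
Proof. by rewrite /qN !addr_ge0 // sqr_ge0. Qed.
Lemma qn_ge0 q : 0 <= qn q. Proof. exact: sqrtr_ge0. Qed.
Lemma qn_sqr q : qn q ^+ 2 = qN q. Proof. by rewrite sqr_sqrtr // qN_ge0. Qed.

Lemma qNM p q : qN (p * q) = qN p * qN q.
Proof. by case: p q => [a b c d] [e f g h]; rewrite /qN qmulE /=; ring. Qed.
Lemma qnM p q : qn (p * q) = qn p * qn q.
Proof. by rewrite /qn qNM sqrtrM // qN_ge0. Qed.

Lemma qconjM p q : qconj (p * q) = qconj q * qconj p.
Proof. by case: p q => [a b c d] [e f g h]; rewrite /qconj !qmulE /=; congr Quat; ring. Qed.
Lemma qconjD p q : qconj (p + q) = qconj p + qconj q.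
Proof. case: p q => [a b c d] [e f g h]; rewrite /qconj !qaddE /=. rewrite /qadd /=. congr Quat; rewrite opprD. all: by []. Qed.
Lemma qconjN p : qconj (- p) = - qconj p.
Proof. by case: p => [a b c d]; rewrite /qconj !qoppE /=. Qed.
Lemma qconjB p q : qconj (p - q) = qconj p - qconj q.
Proof. by rewrite qconjD qconjN. Qed.
Lemma qconjK p : qconj (qconj p) = p.
Proof. by case: p => [a b c d]; rewrite /qconj /= !opprK. Qed.
Lemma qconj0 : qconj (0 : H) = 0.
Proof. by rewrite /qconj /= oppr0. Qed.
Lemma qconj1 : qconj (1 : H) = 1.
Proof. by rewrite /qconj /= oppr0. Qed.
Lemma qconjR a : qconj (qR a) = qR a.
Proof. by rewrite /qconj /= oppr0. Qed.
Lemma qconj_sum I (s : seq I) (P : pred I) (F : I -> H) :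
  qconj (\sum_(i <- s | P i) F i) = \sum_(i <- s | P i) qconj (F i).
Proof. exact: (big_morph _ qconjD qconj0). Qed.
Lemma qconjX p k : qconj (p ^+ k) = qconj p ^+ k.
Proof.
elim: k => [|k IH]; first by rewrite !expr0 qconj1.
by rewrite exprS qconjM IH -exprSr.
Qed.

Lemma qN_conj p : qN (qconj p) = qN p.
Proof. by case: p => [a b c d]; rewrite /qN /qconj /= !sqrrN. Qed.
Lemma qn_conj p : qn (qconj p) = qn p.
Proof. by rewrite /qn qN_conj. Qed.

Lemma qconj_mul p : qconj p * p = qR (qN p).
Proof. by case: p => [a b c d]; rewrite /qconj /qR /qN qmulE /=; congr Quat; ring. Qed.
Lemma qmul_conj p : p * qconj p = qR (qN p).
Proof. by case: p => [a b c d]; rewrite /qconj /qR /qN qmulE /=; congr Quat; ring. Qed.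

Lemma qRD a b : qR (a + b) = qR a + qR b.
Proof. by rewrite /qR qaddE /qadd /= addr0. Qed.
Lemma qRN a : qR (- a) = - qR a.
Proof. by rewrite /qR qoppE /qopp /= oppr0. Qed.
Lemma qRB a b : qR (a - b) = qR a - qR b.
Proof. by rewrite qRD qRN. Qed.
Lemma qR0 : qR 0 = (0:H). Proof. by []. Qed.
Lemma qR1 : qR 1 = (1:H). Proof. by []. Qed.
Lemma qRM a b : qR (a * b) = qR a * qR b.
Proof. by rewrite /qR qmulE /=; congr Quat; ring. Qed.
Lemma qRC a q : qR a * q = q * qR a.
Proof. by case: q => [e f g h]; rewrite /qR !qmulE /=; congr Quat; ring. Qed.
Lemma qR_sum I (s : seq I) (P : pred I) (F : I -> R) :
  qR (\sum_(i <- s | P i) F i) = \sum_(i <- s | P i) qR (F i).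
Proof. exact: (big_morph _ qRD qR0). Qed.
Lemma qR_inj a b : qR a = qR b -> a = b.
Proof. by case. Qed.

Lemma q0D p q : q0 (p + q) = q0 p + q0 q. Proof. by []. Qed.
Lemma q1D p q : q1 (p + q) = q1 p + q1 q. Proof. by []. Qed.
Lemma q2D p q : q2 (p + q) = q2 p + q2 q. Proof. by []. Qed.
Lemma q3D p q : q3 (p + q) = q3 p + q3 q. Proof. by []. Qed.
Lemma q0_sum I (s : seq I) (P : pred I) (F : I -> H) :
  q0 (\sum_(i <- s | P i) F i) = \sum_(i <- s | P i) q0 (F i).
Proof. exact: (big_morph _ q0D (erefl _)). Qed.
Lemma q1_sum I (s : seq I) (P : pred I) (F : I -> H) :
  q1 (\sum_(i <- s | P i) F i) = \sum_(i <- s | P i) q1 (F i).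
Proof. exact: (big_morph _ q1D (erefl _)). Qed.
Lemma q2_sum I (s : seq I) (P : pred I) (F : I -> H) :
  q2 (\sum_(i <- s | P i) F i) = \sum_(i <- s | P i) q2 (F i).
Proof. exact: (big_morph _ q2D (erefl _)). Qed.
Lemma q3_sum I (s : seq I) (P : pred I) (F : I -> H) :
  q3 (\sum_(i <- s | P i) F i) = \sum_(i <- s | P i) q3 (F i).
Proof. exact: (big_morph _ q3D (erefl _)). Qed.

Lemma qR_mul_comp a q :
  qR a * q = Quat (a * q0 q) (a * q1 q) (a * q2 q) (a * q3 q).
Proof. by case: q => [e f g h]; rewrite /qR qmulE /=; congr Quat; ring. Qed.

Lemma qNR a : qN (qR a) = a ^+ 2.
Proof. by rewrite /qN /= expr0n /= !addr0. Qed.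
Lemma qnR a : qn (qR a) = `|a|.
Proof. by rewrite /qn qNR sqrtr_sqr. Qed.
Lemma qN0 : qN (0:H) = 0. Proof. by rewrite -qR0 qNR expr0n. Qed.
Lemma qn0 : qn (0:H) = 0. Proof. by rewrite -qR0 qnR normr0. Qed.
Lemma qn1 : qn (1:H) = 1. Proof. by rewrite -qR1 qnR normr1. Qed.

Lemma qnX p k : qn (p ^+ k) = qn p ^+ k.
Proof.
elim: k => [|k IH]; first by rewrite !expr0 qn1.
by rewrite exprS qnM IH -exprS.
Qed.

Lemma qND p q : qN (p + q) = qN p + qN q + 2 * qdot p q.
Proof. by case: p q => [a b c d] [e f g h]; rewrite /qN /qdot qaddE /=; ring. Qed.

Lemma qdot_sqr p q : qdot p q ^+ 2 <= qN p * qN q.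
Proof.
case: p q => [a b c d] [e f g h]; rewrite /qN /qdot /=.
rewrite -subr_ge0.
have -> : (a ^+ 2 + b ^+ 2 + c ^+ 2 + d ^+ 2) * (e ^+ 2 + f ^+ 2 + g ^+ 2 + h ^+ 2) -
  (a * e + b * f + c * g + d * h) ^+ 2 =
  (a*f - b*e)^+2 + (a*g - c*e)^+2 + (a*h - d*e)^+2 + (b*g - c*f)^+2 + (b*h-d*f)^+2
   + (c*h - d*g)^+2 by ring.
by rewrite !addr_ge0 // sqr_ge0.
Qed.

Lemma le_of_sqr (x y : R) : 0 <= y -> x ^+ 2 <= y ^+ 2 -> x <= y.
Proof. move=> y0 h; nra. Qed.

Lemma qnD p q : qn (p + q) <= qn p + qn q.
Proof.
apply: le_of_sqr; first by rewrite addr_ge0 // qn_ge0.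
have h : qdot p q <= qn p * qn q.
  apply: le_of_sqr; first by rewrite mulr_ge0 // qn_ge0.
  by rewrite exprMn !qn_sqr qdot_sqr.
rewrite qn_sqr qND sqrrD !qn_sqr; nra.
Qed.

Lemma qnB p q : qn (p - q) <= qn p + qn q.
Proof.
have -> : qn q = qn (- q) by rewrite /qn /qN !qoppE /= !sqrrN.
exact: qnD.
Qed.

Lemma qn_sum I (s : seq I) (P : pred I) (F : I -> H) :
  qn (\sum_(i <- s | P i) F i) <= \sum_(i <- s | P i) qn (F i).
Proof.
elim/big_rec2: _ => [|i y1 y2 _ IH]; first by rewrite qn0.
by apply: le_trans (qnD _ _) _; rewrite lerD2l.
Qed.

Lemma comp_le_qn q :
  [/\ `|q0 q| <= qn q, `|q1 q| <= qn q, `|q2 q| <= qn q & `|q3 q| <= qn q].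
Proof.
case: q => [a b c d]; rewrite /qn /qN /=.
split; rewrite -sqrtr_sqr ler_sqrt; nra.
Qed.

Lemma qN_sum_le I (s : seq I) (P : pred I) (z : I -> H) (al be : I -> R) :
  (forall i, P i -> 0 <= al i) -> (forall i, P i -> 0 <= be i) ->
  (forall i, P i -> qN (z i) <= al i * be i) ->
  qN (\sum_(i <- s | P i) z i) <=
    (\sum_(i <- s | P i) al i) * (\sum_(i <- s | P i) be i).
Proof.
move=> a0 b0 hz.
elim: s => [|i s IH]; first by rewrite !big_nil qN0 mulr0.
rewrite !big_cons; case: ifP => Pi //.
have A0 : 0 <= \sum_(j <- s | P j) al j by rewrite sumr_ge0.
have B0 : 0 <= \sum_(j <- s | P j) be j by rewrite sumr_ge0.
move: IH (hz i Pi) (a0 i Pi) (b0 i Pi) A0 B0.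
set A := \sum_(j <- s | P j) al j; set B := \sum_(j <- s | P j) be j.
set S := \sum_(j <- s | P j) z j => hS hi ai bi.
move=> A0' B0'.
rewrite qND.
have hd := qdot_sqr (z i) S.
have h2 : 2 * qdot (z i) S <= A * be i + al i * B.
  apply: le_of_sqr; first by rewrite addr_ge0 // mulr_ge0.
  have h3 : qdot (z i) S ^+ 2 <= (al i * be i) * (A * B).
    apply: le_trans hd _; apply: ler_pM => //; exact: qN_ge0.
  have h4 : 4 * ((al i * be i) * (A * B)) <= (A * be i + al i * B) ^+ 2.
    rewrite -subr_ge0.
    have -> : (A * be i + al i * B) ^+ 2 - 4 * ((al i * be i) * (A * B)) =
      (A * be i - al i * B) ^+ 2 by ring.
    exact: sqr_ge0.
  apply: le_trans h4; rewrite exprMn.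
  have -> : (2:R) ^+ 2 = 4 by rewrite expr2; ring.
  by rewrite ler_pM2l.
nra.
Qed.

End Q.

Section M.
Variable R : realType.
Local Notation H := (quat R).

Lemma mxadjE m n (M : 'M[H]_(m, n)) i j : mxadj M i j = qconj (M j i).
Proof. by rewrite /mxadj !mxE. Qed.

Lemma mxadjK m n (M : 'M[H]_(m, n)) : mxadj (mxadj M) = M.
Proof. by apply/matrixP => i j; rewrite !mxadjE qconjK. Qed.

Lemma mxadjD m n (M N : 'M[H]_(m, n)) : mxadj (M + N) = mxadj M + mxadj N.
Proof. by apply/matrixP => i j; rewrite !mxadjE !mxE qconjD. Qed.

Lemma mxadjN m n (M : 'M[H]_(m, n)) : mxadj (- M) = - mxadj M.
Proof. by apply/matrixP => i j; rewrite !mxadjE !mxE qconjN. Qed.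

Lemma mxadjB m n (M N : 'M[H]_(m, n)) : mxadj (M - N) = mxadj M - mxadj N.
Proof. by rewrite mxadjD mxadjN. Qed.

Lemma mxadjM m n p (M : 'M[H]_(m, n)) (N : 'M[H]_(n, p)) :
  mxadj (M *m N) = mxadj N *m mxadj M.
Proof.
apply/matrixP => i j; rewrite !mxadjE !mxE qconj_sum.
by apply: eq_bigr => k _; rewrite qconjM !mxadjE.
Qed.

Lemma mxadj_scalar n (a : H) : mxadj (a%:M : 'M[H]_n) = (qconj a)%:M.
Proof.
apply/matrixP => i j; rewrite !mxadjE !mxE.
by case: (eqVneq i j) => [eij|h]; rewrite ?mulr1n ?mulr0n ?qconj0.
Qed.

Lemma mxadj1 n : mxadj (1%:M : 'M[H]_n) = 1%:M.
Proof. by rewrite mxadj_scalar qconj1. Qed.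

Lemma mxadj0 m n : mxadj (0 : 'M[H]_(m, n)) = 0.
Proof. by apply/matrixP => i j; rewrite !mxadjE !mxE qconj0. Qed.



Lemma mxadj_block m1 m2 n1 n2 (Aul : 'M[H]_(m1, n1)) (Aur : 'M[H]_(m1, n2))
  (Adl : 'M[H]_(m2, n1)) (Adr : 'M[H]_(m2, n2)) :
  mxadj (block_mx Aul Aur Adl Adr) =
  block_mx (mxadj Aul) (mxadj Adl) (mxadj Aur) (mxadj Adr).
Proof. by rewrite /mxadj map_block_mx tr_block_mx. Qed.

Lemma mxadj_col m1 m2 n (A1 : 'M[H]_(m1, n)) (A2 : 'M[H]_(m2, n)) :
  mxadj (col_mx A1 A2) = row_mx (mxadj A1) (mxadj A2).
Proof. by rewrite /mxadj map_col_mx tr_col_mx. Qed.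

Lemma unitary_blocks N r (A : 'M[H]_N) (B : 'M[H]_(N, r)) (C : 'M[H]_(r, N))
  (D : 'M[H]_r) : unitary (block_mx A B C D) ->
  [/\ mxadj A *m A + mxadj C *m C = 1%:M,
      mxadj A *m B + mxadj C *m D = 0,
      mxadj B *m B + mxadj D *m D = 1%:M,
      A *m mxadj A + B *m mxadj B = 1%:M &
      C *m mxadj C + D *m mxadj D = 1%:M].
Proof.
case; rewrite mxadj_block !mulmx_block (scalar_mx_block N r).
case/eq_block_mx => h1 h2 _ h4; case/eq_block_mx => h5 _ _ h8.
by split.
Qed.

Definition nv n (v : 'cV[H]_n) : R := \sum_i qN (v i 0).
Definition rown m n (M : 'M[H]_(m, n)) (i : 'I_m) : R := \sum_k qN (M i k).

Lemma nv_ge0 n (v : 'cV[H]_n) : 0 <= nv v.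
Proof. by apply: sumr_ge0 => i _; apply: qN_ge0. Qed.
Lemma rown_ge0 m n (M : 'M[H]_(m, n)) i : 0 <= rown M i.
Proof. by apply: sumr_ge0 => k _; apply: qN_ge0. Qed.

Lemma adj_mul_self n (v : 'cV[H]_n) : (mxadj v *m v) 0 0 = qR (nv v).
Proof.
rewrite !mxE qR_sum; apply: eq_bigr => i _.
by rewrite mxadjE qconj_mul.
Qed.

Lemma mul_adj_diag m n (M : 'M[H]_(m, n)) i : (M *m mxadj M) i i = qR (rown M i).
Proof.
rewrite !mxE qR_sum; apply: eq_bigr => k _.
by rewrite mxadjE qmul_conj.
Qed.

Lemma qN_le_nv n (v : 'cV[H]_n) i : qN (v i 0) <= nv v.
Proof.
rewrite /nv (bigD1 i) //= lerDl; apply: sumr_ge0 => k _; exact: qN_ge0.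
Qed.

Lemma qN_le_rown m n (M : 'M[H]_(m, n)) i j : qN (M i j) <= rown M i.
Proof.
rewrite /rown (bigD1 j) //= lerDl; apply: sumr_ge0 => k _; exact: qN_ge0.
Qed.

Lemma nv_col m1 m2 (a : 'cV[H]_m1) (b : 'cV[H]_m2) :
  nv (col_mx a b) = nv a + nv b.
Proof.
by rewrite /nv big_split_ord /=; congr (_ + _); apply: eq_bigr => i _;
  rewrite ?col_mxEu ?col_mxEd.
Qed.

Lemma nv_isom n (U : 'M[H]_n) (z : 'cV[H]_n) :
  mxadj U *m U = 1%:M -> nv (U *m z) = nv z.
Proof.
move=> hU; apply: qR_inj; rewrite -!adj_mul_self mxadjM.
by rewrite -mulmxA (mulmxA (mxadj U)) hU mul1mx.
Qed.

Lemma rown_1 n (i : 'I_n) : rown (1%:M : 'M[H]_n) i = 1.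
Proof.
by apply: qR_inj; rewrite -mul_adj_diag mxadj1 mulmx1 !mxE eqxx mulr1n.
Qed.

Lemma rown_split m n p (M : 'M[H]_(m, n)) (A : 'M[H]_n) (B : 'M[H]_(n, p)) i :
  A *m mxadj A + B *m mxadj B = 1%:M ->
  rown (M *m A) i = rown M i - rown (M *m B) i.
Proof.
move=> h; apply: qR_inj; rewrite qRB -!mul_adj_diag !mxadjM.
have -> : M *m A *m (mxadj A *m mxadj M) =
  M *m (A *m mxadj A) *m mxadj M by rewrite !mulmxA.
have -> : M *m B *m (mxadj B *m mxadj M) =
  M *m (B *m mxadj B) *m mxadj M by rewrite !mulmxA.
have -> : A *m mxadj A = 1%:M - B *m mxadj B by rewrite -h addrK.
rewrite mulmxBr mulmx1 mulmxBl.
by rewrite [LHS]mxE [X in _ + X = _]mxE.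
Qed.

Lemma rown_block2 m n p (C : 'M[H]_(m, n)) (D : 'M[H]_(m, p)) i :
  C *m mxadj C + D *m mxadj D = 1%:M -> rown C i + rown D i = 1.
Proof.
move=> h; apply: qR_inj; rewrite qRD -!mul_adj_diag.
move: (congr1 (fun M : 'M[H]_m => M i i) h) => /=; rewrite [X in X = _ -> _]mxE => ->.
by rewrite mxE eqxx mulr1n.
Qed.

Lemma qn_le_rown m n (M : 'M[H]_(m, n)) i j : qn (M i j) <= Num.sqrt (rown M i).
Proof. by rewrite ler_sqrt ?rown_ge0 ?qN_le_rown. Qed.

Lemma qn_mul_entry m n p (M : 'M[H]_(m, n)) (N : 'M[H]_(n, p)) i j :
  qn ((M *m N) i j) <= \sum_k qn (M i k) * qn (N k j).
Proof.
rewrite mxE; apply: le_trans (qn_sum _ _ _) _.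
by apply: ler_sum => k _; rewrite qnM.
Qed.

Definition mxb m n (M : 'M[H]_(m, n)) : R := \sum_i \sum_j qn (M i j).

Lemma mxb_ge0 m n (M : 'M[H]_(m, n)) : 0 <= mxb M.
Proof. by apply: sumr_ge0 => i _; apply: sumr_ge0 => j _; apply: qn_ge0. Qed.

Lemma qn_le_mxb m n (M : 'M[H]_(m, n)) i j : qn (M i j) <= mxb M.
Proof.
rewrite /mxb (bigD1 i) //= (bigD1 j) //= -addrA lerDl.
rewrite addr_ge0 //; apply: sumr_ge0 => k _; first exact: qn_ge0.
by apply: sumr_ge0 => l _; apply: qn_ge0.
Qed.

End M.

Section Re.
Variable R : realType.

Definition psum (f : nat -> R) (K : nat) : R := \sum_(k < K) f k.

Lemma psum_series f : psum f = series f.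
Proof. by apply/funext => K; rewrite /psum /series /= big_mkord. Qed.

Lemma psum_nd f : (forall k, 0 <= f k) -> nondecreasing_seq (psum f).
Proof.
move=> f0 n m nm; rewrite /psum -!(big_mkord xpredT).
rewrite (big_cat_nat (leq0n n) nm) /= lerDl; exact: sumr_ge0.
Qed.

Lemma psum_cvg f B : (forall k, 0 <= f k) -> (forall K, psum f K <= B) ->
  cvgn (psum f).
Proof.
move=> f0 hB; apply: nondecreasing_is_cvgn; first exact: psum_nd.
by exists B => _ [n _ <-].
Qed.

Lemma lim_le_cst (s : nat -> R) l B : s @ \oo --> l -> (forall n, s n <= B) -> l <= B.
Proof.
move=> hs hB; apply: (ler_cvg_to hs (cvg_cst B)).
by apply: nearW => n; exact: hB.
Qed.

Lemma lim_ge_cst (s : nat -> R) l B : s @ \oo --> l -> (forall n, B <= s n) -> B <= l.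
Proof.
move=> hs hB; apply: (ler_cvg_to (cvg_cst B) hs).
by apply: nearW => n; exact: hB.
Qed.

Lemma abs_psum_cvg f g B : (forall k, `|f k| <= g k) -> (forall K, psum g K <= B) ->
  cvgn (psum f) /\ `|limn (psum f)| <= B.
Proof.
move=> hfg hB.
have g0 k : 0 <= g k by apply: le_trans (hfg k).
have hn : cvgn (psum (fun k => `|f k|)).
  apply: (@psum_cvg _ B) => [k|K]; first exact: normr_ge0.
  apply: le_trans (hB K); apply: ler_sum => k _; exact: hfg.
have hc : cvgn (psum f).
  rewrite psum_series; apply: normed_cvg.
  by move: hn; rewrite psum_series.
split => //.
have hc' : psum f @ \oo --> limn (psum f) := hc.
apply: (lim_le_cst (cvg_norm hc')) => n /=. apply: le_trans (hB n); rewrite /psum.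
apply: le_trans (ler_norm_sum _ _ _) _; apply: ler_sum => k _; exact: hfg.
Qed.

Lemma cvg0_bound (u v : nat -> R) : (forall n, `|u n| <= v n) -> v @ \oo --> 0 ->
  u @ \oo --> 0.
Proof.
move=> h hv; apply/cvgr0Pnorm_le => e e0.
near=> n; apply: le_trans (h n) _; apply: le_trans (ler_norm _) _.
near: n; exact: cvgr0_norm_le.
Unshelve. all: by end_near. Qed.

Lemma cvg_of_dist (u v : nat -> R) l : (forall n, `|u n - l| <= v n) ->
  v @ \oo --> 0 -> u @ \oo --> l.
Proof.
move=> h hv; apply/subr_cvg0; exact: cvg0_bound h hv.
Qed.

End Re.

Section QC.
Variable R : realType.
Local Notation H := (quat R).
Implicit Types (p q l a b : H) (s t : nat -> H).

Lemma q0M p q : q0 (p * q) = q0 p * q0 q - q1 p * q1 q - q2 p * q2 q - q3 p * q3 q.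
Proof. by case: p q => [? ? ? ?] [? ? ? ?]. Qed.
Lemma q1M p q : q1 (p * q) = q0 p * q1 q + q1 p * q0 q + q2 p * q3 q - q3 p * q2 q.
Proof. by case: p q => [? ? ? ?] [? ? ? ?]. Qed.
Lemma q2M p q : q2 (p * q) = q0 p * q2 q - q1 p * q3 q + q2 p * q0 q + q3 p * q1 q.
Proof. by case: p q => [? ? ? ?] [? ? ? ?]. Qed.
Lemma q3M p q : q3 (p * q) = q0 p * q3 q + q1 p * q2 q - q2 p * q1 q + q3 p * q0 q.
Proof. by case: p q => [? ? ? ?] [? ? ? ?]. Qed.

Lemma qcvgP s l : qcvg s l ->
  [/\ (fun n => q0 (s n)) @ \oo --> q0 l, (fun n => q1 (s n)) @ \oo --> q1 l,
      (fun n => q2 (s n)) @ \oo --> q2 l & (fun n => q3 (s n)) @ \oo --> q3 l].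
Proof. by []. Qed.

Lemma qcvg_cst l : qcvg (fun _ => l) l.
Proof. by split; apply: cvg_cst. Qed.

Lemma qcvg_add s t a b : qcvg s a -> qcvg t b -> qcvg (fun n => s n + t n) (a + b).
Proof.
by case=> h0 h1 h2 h3 [g0 g1 g2 g3]; split; [exact: cvgD h0 g0|exact: cvgD h1 g1|
  exact: cvgD h2 g2|exact: cvgD h3 g3].
Qed.

Lemma qcvg_opp s a : qcvg s a -> qcvg (fun n => - s n) (- a).
Proof.
by case=> h0 h1 h2 h3; split; [exact: cvgN h0|exact: cvgN h1|exact: cvgN h2|exact: cvgN h3].
Qed.

Lemma qcvg_sub s t a b : qcvg s a -> qcvg t b -> qcvg (fun n => s n - t n) (a - b).
Proof. by move=> h g; apply: qcvg_add h (qcvg_opp g). Qed.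

Lemma qcvg_conj s a : qcvg s a -> qcvg (fun n => qconj (s n)) (qconj a).
Proof. by case=> h0 h1 h2 h3; split => //=; apply: cvgN. Qed.

Lemma qcvg_mul s t a b : qcvg s a -> qcvg t b -> qcvg (fun n => s n * t n) (a * b).
Proof.
case=> h0 h1 h2 h3 [g0 g1 g2 g3]; split.
- rewrite q0M; under eq_fun do rewrite q0M.
  by apply: cvgB; [apply: cvgB; [apply: cvgB|]|]; apply: cvgM.
- rewrite q1M; under eq_fun do rewrite q1M.
  by apply: cvgB; [apply: cvgD; [apply: cvgD|]|]; apply: cvgM.
- rewrite q2M; under eq_fun do rewrite q2M.
  by apply: cvgD; [apply: cvgD; [apply: cvgB|]|]; apply: cvgM.
- rewrite q3M; under eq_fun do rewrite q3M.
  by apply: cvgD; [apply: cvgB; [apply: cvgD|]|]; apply: cvgM.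
Qed.

Lemma qcvg_R (u : nat -> R) (a : R) : u @ \oo --> a -> qcvg (fun n => qR (u n)) (qR a).
Proof. by move=> h; split => //=; apply: cvg_cst. Qed.

Lemma qcvg_sum I (r : seq I) (P : pred I) (F : I -> nat -> H) (L : I -> H) :
  (forall i, P i -> qcvg (F i) (L i)) ->
  qcvg (fun K => \sum_(i <- r | P i) F i K) (\sum_(i <- r | P i) L i).
Proof.
move=> h; elim: r => [|i r IH].
  by under eq_fun do rewrite big_nil; rewrite big_nil; apply: qcvg_cst.
under eq_fun do rewrite big_cons; rewrite big_cons.
by case: ifP => Pi //; apply: qcvg_add => //; apply: h.
Qed.

Lemma qcvg_ext s t a : (forall n, s n = t n) -> qcvg s a -> qcvg t a.
Proof. by move=> e; rewrite (_ : t = s) //; apply/funext => n; rewrite e. Qed.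

Lemma qcvg_unique s a b : qcvg s a -> qcvg s b -> a = b.
Proof.
case: a b => [a0 a1 a2 a3] [b0 b1 b2 b3] [h0 h1 h2 h3] [g0 g1 g2 g3] /=.
by congr Quat; [exact: (cvg_unique (@Rhausdorff R) h0 g0)|
  exact: (cvg_unique (@Rhausdorff R) h1 g1)|exact: (cvg_unique (@Rhausdorff R) h2 g2)|
  exact: (cvg_unique (@Rhausdorff R) h3 g3)].
Qed.

Lemma qN_cvg s a : qcvg s a -> (fun n => qN (s n)) @ \oo --> qN a.
Proof.
case=> h0 h1 h2 h3; rewrite /qN.
by apply: cvgD; [apply: cvgD; [apply: cvgD|]|]; apply: cvgM.
Qed.

Lemma qcvg_bound s a B : qcvg s a -> (forall n, qn (s n) <= B) -> qn a <= B.
Proof.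
move=> h hB; have B0 : 0 <= B by apply: le_trans (hB 0%N); apply: qn_ge0.
apply: le_of_sqr => //; rewrite qn_sqr.
apply: (lim_le_cst (qN_cvg h)) => n; rewrite -qn_sqr.
by rewrite lerXn2r // ?nnegrE ?qn_ge0.
Qed.

Lemma qcvg_of_dist s a (v : nat -> R) : (forall n, qn (s n - a) <= v n) ->
  v @ \oo --> 0 -> qcvg s a.
Proof.
move=> h hv; split; apply: (cvg_of_dist _ hv) => n; apply: le_trans (h n);
  by case: (comp_le_qn (s n - a)).
Qed.

Lemma c0le q : `|q0 q| <= qn q. Proof. by case: (comp_le_qn q). Qed.
Lemma c1le q : `|q1 q| <= qn q. Proof. by case: (comp_le_qn q). Qed.
Lemma c2le q : `|q2 q| <= qn q. Proof. by case: (comp_le_qn q). Qed.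
Lemma c3le q : `|q3 q| <= qn q. Proof. by case: (comp_le_qn q). Qed.

Definition qlim s : H := Quat (limn (fun n => q0 (s n))) (limn (fun n => q1 (s n)))
  (limn (fun n => q2 (s n))) (limn (fun n => q3 (s n))).

Lemma qsum_abs (f : nat -> H) (g : nat -> R) B :
  (forall k, qn (f k) <= g k) -> (forall K, psum g K <= B) ->
  qcvg (fun K => \sum_(k < K) f k) (qlim (fun K => \sum_(k < K) f k)) /\
  qn (qlim (fun K => \sum_(k < K) f k)) <= B.
Proof.
move=> hf hB.
have hc : qcvg (fun K => \sum_(k < K) f k) (qlim (fun K => \sum_(k < K) f k)).
  rewrite /qlim; split => /=.
  - under eq_fun do rewrite q0_sum.
    have [c _] := @abs_psum_cvg _ (fun k => q0 (f k)) g B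
      (fun k => le_trans (c0le (f k)) (hf k)) hB.
    exact: c.
  - under eq_fun do rewrite q1_sum.
    have [c _] := @abs_psum_cvg _ (fun k => q1 (f k)) g B
      (fun k => le_trans (c1le (f k)) (hf k)) hB.
    exact: c.
  - under eq_fun do rewrite q2_sum.
    have [c _] := @abs_psum_cvg _ (fun k => q2 (f k)) g B
      (fun k => le_trans (c2le (f k)) (hf k)) hB.
    exact: c.
  - under eq_fun do rewrite q3_sum.
    have [c _] := @abs_psum_cvg _ (fun k => q3 (f k)) g B
      (fun k => le_trans (c3le (f k)) (hf k)) hB.
    exact: c.
split => //; apply: (qcvg_bound hc) => K.
apply: le_trans (qn_sum _ _ _) _; apply: le_trans (hB K); apply: ler_sum => k _; exact: hf.
Qed.

End QC.

Section MC.
Variable R : realType.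
Local Notation H := (quat R).

Definition mxcvg m n (S : nat -> 'M[H]_(m, n)) (L : 'M[H]_(m, n)) : Prop :=
  forall i j, qcvg (fun K => S K i j) (L i j).

Lemma mx_sum_toE m n (f : nat -> 'M[H]_(m, n)) L :
  mx_sum_to f L <-> mxcvg (fun K => \sum_(k < K) f k) L.
Proof. by []. Qed.

Lemma mxcvg_cst m n (L : 'M[H]_(m, n)) : mxcvg (fun _ => L) L.
Proof. by move=> i j; apply: qcvg_cst. Qed.

Lemma mxcvg_ext m n (S T : nat -> 'M[H]_(m, n)) L :
  (forall K, S K = T K) -> mxcvg S L -> mxcvg T L.
Proof. by move=> e h i j; apply: qcvg_ext (h i j) => K; rewrite e. Qed.

Lemma mxcvg_add m n (S T : nat -> 'M[H]_(m, n)) L M :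
  mxcvg S L -> mxcvg T M -> mxcvg (fun K => S K + T K) (L + M).
Proof.
move=> h g i j; rewrite mxE; apply: qcvg_ext (qcvg_add (h i j) (g i j)) => K.
by rewrite mxE.
Qed.

Lemma mxcvg_opp m n (S : nat -> 'M[H]_(m, n)) L :
  mxcvg S L -> mxcvg (fun K => - S K) (- L).
Proof.
move=> h i j; rewrite mxE; apply: qcvg_ext (qcvg_opp (h i j)) => K.
by rewrite mxE.
Qed.

Lemma mxcvg_sub m n (S T : nat -> 'M[H]_(m, n)) L M :
  mxcvg S L -> mxcvg T M -> mxcvg (fun K => S K - T K) (L - M).
Proof. by move=> h g; apply: mxcvg_add h (mxcvg_opp g). Qed.

Lemma mxcvg_mul m n p (S : nat -> 'M[H]_(m, n)) (T : nat -> 'M[H]_(n, p)) L M :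
  mxcvg S L -> mxcvg T M -> mxcvg (fun K => S K *m T K) (L *m M).
Proof.
move=> h g i j; rewrite mxE.
apply: qcvg_ext; last first.
  by apply: qcvg_sum => l _; apply: qcvg_mul (h i l) (g l j).
by move=> K; rewrite mxE.
Qed.

Lemma mxcvg_adj m n (S : nat -> 'M[H]_(m, n)) L :
  mxcvg S L -> mxcvg (fun K => mxadj (S K)) (mxadj L).
Proof.
move=> h i j; rewrite mxadjE; apply: qcvg_ext (qcvg_conj (h j i)) => K.
by rewrite mxadjE.
Qed.

Lemma mxcvg_scale m n (c : nat -> H) (S : nat -> 'M[H]_(m, n)) a L :
  qcvg c a -> mxcvg S L -> mxcvg (fun K => c K *: S K) (a *: L).
Proof.
move=> hc h i j; rewrite mxE; apply: qcvg_ext (qcvg_mul hc (h i j)) => K.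
by rewrite mxE.
Qed.

Lemma mxcvg_unique m n (S : nat -> 'M[H]_(m, n)) L M :
  mxcvg S L -> mxcvg S M -> L = M.
Proof. by move=> h g; apply/matrixP => i j; apply: qcvg_unique (h i j) (g i j). Qed.

Lemma mxcvg_bound m n (S : nat -> 'M[H]_(m, n)) L B :
  mxcvg S L -> (forall K i j, qn (S K i j) <= B) -> forall i j, qn (L i j) <= B.
Proof. by move=> h hB i j; apply: qcvg_bound (h i j) _ => K; apply: hB. Qed.

Lemma mxcvg_of_dist m n (S : nat -> 'M[H]_(m, n)) (L : 'M[H]_(m, n)) (v : nat -> R) :
  (forall K i j, qn (S K i j - L i j) <= v K) -> v @ \oo --> 0 -> mxcvg S L.
Proof. by move=> h hv i j; apply: qcvg_of_dist hv => K; apply: h. Qed.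

Definition mxlimS m n (f : nat -> 'M[H]_(m, n)) : 'M[H]_(m, n) :=
  \matrix_(i, j) qlim (fun K => \sum_(k < K) f k i j).

Lemma mx_sum_abs m n (f : nat -> 'M[H]_(m, n)) (g : nat -> R) B :
  (forall k i j, qn (f k i j) <= g k) -> (forall K, psum g K <= B) ->
  mx_sum_to f (mxlimS f) /\ forall i j, qn (mxlimS f i j) <= B.
Proof.
move=> hf hB.
have h i j := qsum_abs (fun k => hf k i j) hB.
split => i j; rewrite mxE; have [h1 h2] := h i j => //.
by apply: qcvg_ext h1 => K; rewrite summxE.
Qed.

Lemma mx_sum_unique m n (f : nat -> 'M[H]_(m, n)) L M :
  mx_sum_to f L -> mx_sum_to f M -> L = M.
Proof. exact: mxcvg_unique. Qed.

End MC.

Section P.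
Variable R : realType.
Local Notation H := (quat R).

Definition Salt (m : nat) : R := \sum_(j < m.+1) (-1) ^+ j * ((m - j).+1)%:R.

Lemma SaltS m : Salt m.+1 = (m.+2)%:R - Salt m.
Proof.
rewrite /Salt big_ord_recl /= expr0 mul1r subn0; congr (_ + _).
rewrite -sumrN; apply: eq_bigr => j _; rewrite /= exprS subSS; ring.
Qed.

Lemma Salt_bounds m : (m.+1)%:R <= 2 * Salt m <= (m.+2)%:R.
Proof.
elim: m => [|m IH].
  rewrite /Salt big_ord1 /= expr0 mul1r mulr1; apply/andP; split.
    by rewrite ler_nat.
  by rewrite ler_nat.
rewrite SaltS; move/andP: IH => [h1 h2].
move: h1 h2; rewrite -!natr1 => h1 h2.
apply/andP; split; lra.
Qed.

Lemma ccoefE m : ccoef R m = (2 * Salt m) / ((m.+1)%:R * (m.+2)%:R) :> R.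
Proof.
rewrite /ccoef /Tcoef /Salt mulr_sumr mulr_suml; apply: eq_bigr => j _.
by rewrite mulrA; ring.
Qed.

Lemma ccoef_lb m : (m.+2)%:R ^-1 <= ccoef R m :> R.
Proof.
rewrite ccoefE; have /andP[h1 _] := Salt_bounds m.
have a0 : 0 < (m.+1)%:R :> R by rewrite ltr0n.
have b0 : 0 < (m.+2)%:R :> R by rewrite ltr0n.
apply: le_trans (ler_wpM2r _ h1).
  by rewrite invfM mulrA divff ?mul1r // lt0r_neq0.
by apply: ltW; rewrite invr_gt0 mulr_gt0.
Qed.

Lemma ccoef_gt0 m : 0 < ccoef R m :> R.
Proof. by apply: lt_le_trans (ccoef_lb m); rewrite invr_gt0 ltr0n. Qed.

Lemma ccoefV_le m : (ccoef R m)^-1 <= (m.+2)%:R :> R.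
Proof.
have c0 := ccoef_gt0 m.
rewrite -[(ccoef R m)^-1]mul1r ler_pdivrMr //.
have b0 : 0 < (m.+2)%:R :> R by rewrite ltr0n.
apply: le_trans _ (ler_wpM2l (ltW b0) (ccoef_lb m)).
by rewrite divff // lt0r_neq0.
Qed.

Lemma Tcoef_ge0 m (j : 'I_m.+1) : 0 <= Tcoef R m j :> R.
Proof. by rewrite /Tcoef divr_ge0 // ?mulr_ge0 // ler0n. Qed.

Lemma Tcoef_le m (j : 'I_m.+1) : Tcoef R m j <= 2 / (m.+2)%:R :> R.
Proof.
have a0 : 0 < (m.+1)%:R :> R by rewrite ltr0n.
have b0 : 0 < (m.+2)%:R :> R by rewrite ltr0n.
rewrite /Tcoef.
have -> : 2 / (m.+2)%:R = 2 * (m.+1)%:R / ((m.+1)%:R * (m.+2)%:R) :> R.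
  by rewrite invfM mulrA mulfK // lt0r_neq0.
rewrite ler_pM2r ?invr_gt0 ?mulr_gt0 // ler_pM2l // ler_nat ltnS leq_subr //.
Qed.

Lemma qn_Pm m (x : H) : qn (Pm m x) <= 2 * (m.+2)%:R * qn x ^+ m.
Proof.
rewrite /Pm qnM qnR ger0_norm; last by rewrite invr_ge0 ltW // ccoef_gt0.
have b0 : 0 < (m.+2)%:R :> R by rewrite ltr0n.
have hs : qn (\sum_(j < m.+1) qR (Tcoef R m j) * x ^+ (m - j) * qconj x ^+ j)
    <= 2 * qn x ^+ m.
  apply: le_trans (qn_sum _ _ _) _.
  apply: (@le_trans _ _ (\sum_(j < m.+1) (2 / (m.+2)%:R * qn x ^+ m))).
    apply: ler_sum => j _; rewrite !qnM qnR ger0_norm ?Tcoef_ge0 // qnX qnX qn_conj.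
    rewrite -mulrA -exprD subnK ?leq_ord //; apply: ler_wpM2r; last exact: Tcoef_le.
    by rewrite exprn_ge0 // qn_ge0.
  rewrite sumr_const card_ord -(mulr_natl (2 / (m.+2)%:R * qn x ^+ m) m.+1).
  rewrite mulrA ler_wpM2r ?exprn_ge0 ?qn_ge0 //.
  by rewrite mulrCA -[X in _ <= X]mulr1 ler_wpM2l // ler_pdivrMr // mul1r ler_nat.
have c0 : 0 <= (ccoef R m)^-1 by rewrite invr_ge0 ltW // ccoef_gt0.
apply: le_trans (ler_wpM2l c0 hs) _.
rewrite mulrA ler_wpM2r ?exprn_ge0 ?qn_ge0 //.
by rewrite mulrC ler_wpM2l // ccoefV_le.
Qed.

Lemma ellip_lt1 (x : H) : in_ellip x -> qn x < 1.
Proof.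
rewrite /in_ellip => h.
have h1 : qN x < 1 by rewrite /qN; have := sqr_ge0 (q0 x); lra.
have h2 := qn_ge0 x; have h3 := qn_sqr x; nra.
Qed.

Lemma mul_pow_le (s : R) m : 0 <= s < 1 -> m%:R * s ^+ m <= (1 - s)^-1.
Proof.
case/andP => s0 s1.
have d0 : 0 < 1 - s by lra.
rewrite -[(1 - s)^-1]mul1r ler_pdivlMr //.
have h1 : m%:R * s ^+ m <= \sum_(k < m) s ^+ k.
  have -> : m%:R * s ^+ m = \sum_(k < m) s ^+ m.
    by rewrite sumr_const card_ord mulr_natl.
  apply: ler_sum => k _; apply: ler_wiXn2l => //; [exact: ltW | exact: ltnW].
have h2 : (\sum_(k < m) s ^+ k) * (1 - s) = 1 - s ^+ m.
  elim: m {h1} => [|m IH]; first by rewrite big_ord0 expr0 mul0r subrr.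
  by rewrite big_ord_recr /= mulrDl IH exprS; ring.
apply: le_trans (ler_wpM2r (ltW d0) h1) _; rewrite h2.
by rewrite lerBlDr lerDl exprn_ge0.
Qed.

Lemma Pm_geom (x : H) : in_ellip x ->
  exists (K s : R), [/\ 0 <= K, 0 <= s, s < 1 &
    forall m, qn (Pm m x) <= K * s ^+ m].
Proof.
move=> /ellip_lt1 hx; set s := Num.sqrt (qn x).
have r0 := qn_ge0 x.
have s0 : 0 <= s by apply: sqrtr_ge0.
have s1 : s < 1 by rewrite /s -sqrtr1 ltr_sqrt // ltr01.
have ss : s ^+ 2 = qn x by rewrite /s sqr_sqrtr.
have d0 : 0 < 1 - s by lra.
exists (2 * (2 + (1 - s)^-1)), s; split => //.
  by rewrite mulr_ge0 // addr_ge0 // invr_ge0 ltW.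
move=> m; apply: le_trans (qn_Pm m x) _.
rewrite -ss -exprM mulnC exprM -!mulrA ler_wpM2l //.
have hm := mul_pow_le m (introT andP (conj s0 s1)).
have sm0 : 0 <= s ^+ m by rewrite exprn_ge0.
have sm1 : s ^+ m <= 1 by apply: exprn_ile1 => //; exact: ltW.
rewrite expr2 mulrA ler_wpM2r //.
rewrite -addn2 natrD mulrDl addrC; apply: lerD => //.
by rewrite -[X in _ <= X]mulr1 ler_wpM2l.
Qed.

End P.

Lemma shiftS_iff (R : realType) (u : nat -> R) (a : R) :
  (fun n => u n.+1) @ \oo --> a <-> u @ \oo --> a.
Proof. by rewrite -(cvg_shiftS u). Qed.

Lemma qcvg_shiftS (R : realType) (s : nat -> quat R) a :
  qcvg (fun n => s n.+1) a <-> qcvg s a.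
Proof.
split; case=> h0 h1 h2 h3; split; by [apply/(shiftS_iff (fun n => q0 (s n)))|
  apply/(shiftS_iff (fun n => q1 (s n)))|apply/(shiftS_iff (fun n => q2 (s n)))|
  apply/(shiftS_iff (fun n => q3 (s n)))].
Qed.

Lemma mxcvg_shiftS (R : realType) m n (S : nat -> 'M[quat R]_(m, n)) L :
  mxcvg (fun K => S K.+1) L <-> mxcvg S L.
Proof.
split => h i j; first by apply/(qcvg_shiftS (fun K => S K i j)); exact: h.
by apply/(qcvg_shiftS (fun K => S K i j)); exact: h.
Qed.

Lemma geo_sum_le (R : realType) (s : R) K : 0 <= s < 1 ->
  \sum_(k < K) s ^+ k <= (1 - s)^-1.
Proof.
case/andP => s0 s1; have d0 : 0 < 1 - s by rewrite subr_gt0.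
rewrite -[(1 - s)^-1]mul1r ler_pdivlMr //.
have h2 : (\sum_(k < K) s ^+ k) * (1 - s) = 1 - s ^+ K.
  elim: K => [|K IH]; first by rewrite big_ord0 expr0 mul0r subrr.
  by rewrite big_ord_recr /= mulrDl IH exprS; ring.
by rewrite h2 lerBlDr lerDl exprn_ge0.
Qed.

Section Unit.
Variable R : realType.
Local Notation H := (quat R).
Variables (N r : nat) (A : 'M[H]_N) (B : 'M[H]_(N, r)) (C : 'M[H]_(r, N)) (D : 'M[H]_r).
Hypothesis hU : unitary (block_mx A B C D).

Lemma rowAB : A *m mxadj A + B *m mxadj B = 1%:M.
Proof. by case: (unitary_blocks hU). Qed.
Lemma rowCD : C *m mxadj C + D *m mxadj D = 1%:M.
Proof. by case: (unitary_blocks hU). Qed.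

Lemma powS (k : nat) : A ^+ k.+1 = A ^+ k *m A.
Proof. by rewrite exprSr. Qed.

Lemma rown_CA k i : rown (C *m A ^+ k) i <= 1.
Proof.
elim: k => [|k IH].
  rewrite expr0 mulmx1; have := rown_block2 i rowCD.
  by have := rown_ge0 D i; lra.
rewrite powS mulmxA (rown_split _ _ rowAB).
by have := rown_ge0 (C *m A ^+ k *m B) i; lra.
Qed.

Lemma qn_CA k i j : qn ((C *m A ^+ k) i j) <= 1.
Proof.
apply: le_trans (qn_le_rown _ i j) _.
by rewrite -sqrtr1 ler_sqrt ?ler01 // rown_CA.
Qed.

Lemma sum_rown_AB i J : \sum_(j < J) rown (A ^+ j *m B) i <= 1.
Proof.
have e : forall J, \sum_(j < J) rown (A ^+ j *m B) i = 1 - rown (A ^+ J) i.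
  elim => [|J0 IH]; first by rewrite big_ord0 expr0 rown_1 subrr.
  rewrite big_ord_recr /= IH powS (rown_split _ _ rowAB); ring.
by rewrite e lerBlDr lerDl rown_ge0.
Qed.

End Unit.

Section TF.
Variable R : realType.
Local Notation H := (quat R).
Variables (N r : nat) (A : 'M[H]_N) (B : 'M[H]_(N, r)) (C : 'M[H]_(r, N)) (D : 'M[H]_r).
Hypothesis hU : unitary (block_mx A B C D).
Variables (x : H) (K s : R).
Hypotheses (hK0 : 0 <= K) (hs0 : 0 <= s) (hs1 : s < 1)
  (hP : forall m, qn (Pm m x) <= K * s ^+ m).

Definition tterm n k : 'M[H]_(r, N) := Pm (n + k) x *: (C *m A ^+ k).
Definition Tm n := mxlimS (tterm n).
Definition Fm n := Pm n x *: D + Tm n.+1 *m B.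

Lemma T_sum n : mx_sum_to (tterm n) (Tm n) /\
  forall i j, qn (Tm n i j) <= K * s ^+ n * (1 - s)^-1.
Proof.
apply: (@mx_sum_abs _ _ _ _ (fun k => K * s ^+ (n + k))) => [k i j|K'].
  rewrite /tterm mxE qnM -[K * _]mulr1.
  by apply: ler_pM; rewrite ?qn_ge0 //; exact: (qn_CA hU).
rewrite /psum; under eq_bigr do rewrite exprD mulrA.
rewrite -mulr_sumr ler_wpM2l ?mulr_ge0 ?exprn_ge0 //.
by apply: geo_sum_le; rewrite hs0 hs1.
Qed.

Lemma T_to0 : mxcvg Tm 0.
Proof.
apply: (@mxcvg_of_dist _ _ _ _ _ (geometric (K * (1 - s)^-1) s)).
  move=> n i j; rewrite [X in _ - X]mxE subr0 /=; apply: le_trans (proj2 (T_sum n) i j) _.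
  by rewrite mulrAC.
by apply: cvg_geometric; rewrite ger0_norm.
Qed.

Lemma tterm0 n : tterm n 0 = Pm n x *: C.
Proof. by rewrite /tterm addn0 expr0 mulmx1. Qed.

Lemma ttermS n k : tterm n k.+1 = tterm n.+1 k *m A.
Proof. by rewrite /tterm addnS -addSn powS mulmxA scalemxAl. Qed.

Lemma T_rec n : Tm n = Pm n x *: C + Tm n.+1 *m A.
Proof.
apply: (mx_sum_unique (proj1 (T_sum n))).
apply/mx_sum_toE/mxcvg_shiftS.
apply: (@mxcvg_ext _ _ _ (fun K' => Pm n x *: C + (\sum_(k < K') tterm n.+1 k) *m A)).
  move=> K'; rewrite big_ord_recl tterm0 mulmx_suml; congr (_ + _).
  by apply: eq_bigr => k _; rewrite /= ttermS.
apply: mxcvg_add; first exact: mxcvg_cst.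
apply: mxcvg_mul; last exact: mxcvg_cst.
exact: (proj1 (T_sum n.+1)).
Qed.

Lemma F_sum n : PodotB_to A B C D n x (Fm n).
Proof.
apply/mx_sum_toE/mxcvg_shiftS.
apply: (@mxcvg_ext _ _ _ (fun K' => Pm n x *: D + (\sum_(k < K') tterm n.+1 k) *m B)).
  move=> K'; rewrite big_ord_recl /= addn0 mulmx_suml; congr (_ + _).
  apply: eq_bigr => k _; rewrite /= /tterm addnS -addSn.
  by rewrite -scalemxAl.
apply: mxcvg_add; first exact: mxcvg_cst.
apply: mxcvg_mul; last exact: mxcvg_cst.
exact: (proj1 (T_sum n.+1)).
Qed.

End TF.

Lemma mxadj_row (R : realType) m n1 n2 (A1 : 'M[quat R]_(m, n1)) (A2 : 'M[quat R]_(m, n2)) :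
  mxadj (row_mx A1 A2) = col_mx (mxadj A1) (mxadj A2).
Proof. by rewrite /mxadj map_row_mx tr_row_mx. Qed.

Lemma mul_col_sum (R : realType) m n (M : 'M[quat R]_(m, n)) (v : 'cV[quat R]_n) :
  M *m v = \sum_(i < n) col i M *m (v i 0)%:M.
Proof.
apply/matrixP => a b; rewrite !mxE summxE; apply: eq_bigr => i _.
rewrite !mxE big_ord1 !mxE (ord1 b) eqxx mulr1n.
by [].
Qed.

Section K2.
Variable R : realType.
Local Notation H := (quat R).
Variables (N r : nat) (A : 'M[H]_N) (B : 'M[H]_(N, r)) (C : 'M[H]_(r, N)) (D : 'M[H]_r).
Hypothesis hU : unitary (block_mx A B C D).

Lemma kern_step (Tx Ty : nat -> 'M[H]_(r, N)) (Fx Fy : nat -> 'M[H]_r) (px py : nat -> H) n :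
  Tx n = px n *: C + Tx n.+1 *m A -> Fx n = px n *: D + Tx n.+1 *m B ->
  Ty n = py n *: C + Ty n.+1 *m A -> Fy n = py n *: D + Ty n.+1 *m B ->
  (px n * qconj (py n))%:M - Fx n *m mxadj (Fy n) =
  Tx n *m mxadj (Ty n) - Tx n.+1 *m mxadj (Ty n.+1).
Proof.
move=> h1 h2 h3 h4.
have hrow : forall (T1 T0 : 'M[H]_(r, N)) (p : H) (F0 : 'M[H]_r),
    T0 = p *: C + T1 *m A -> F0 = p *: D + T1 *m B ->
    row_mx T0 F0 = row_mx T1 p%:M *m block_mx A B C D.
  move=> T1 T0 p F0 e1 e2.
  by rewrite mul_row_block !mul_scalar_mx e1 e2 [p *: C + _]addrC [p *: D + _]addrC.
have hUU : block_mx A B C D *m mxadj (block_mx A B C D) = 1%:M by case: hU.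
have key : Tx n *m mxadj (Ty n) + Fx n *m mxadj (Fy n) =
    Tx n.+1 *m mxadj (Ty n.+1) + (px n * qconj (py n))%:M.
  transitivity (row_mx (Tx n) (Fx n) *m mxadj (row_mx (Ty n) (Fy n))).
    by rewrite mxadj_row mul_row_col.
  rewrite (hrow _ _ _ _ h1 h2) (hrow _ _ _ _ h3 h4) mxadjM mulmxA.
  rewrite -(mulmxA _ (block_mx A B C D)) hUU mulmx1 mxadj_row mul_row_col.
  by rewrite mxadj_scalar -scalar_mxM.
rewrite (_ : (px n * qconj (py n))%:M = Tx n *m mxadj (Ty n) + Fx n *m mxadj (Fy n)
   - Tx n.+1 *m mxadj (Ty n.+1)); last by rewrite key addrC addKr.
by rewrite addrAC addrK.
Qed.

Lemma kern_sum (Tx Ty : nat -> 'M[H]_(r, N)) (kt : nat -> 'M[H]_r) :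
  (forall n, kt n = Tx n *m mxadj (Ty n) - Tx n.+1 *m mxadj (Ty n.+1)) ->
  forall K, \sum_(n < K) kt n = Tx 0%N *m mxadj (Ty 0%N) - Tx K *m mxadj (Ty K).
Proof.
move=> h; elim => [|K IH]; first by rewrite big_ord0 subrr.
by rewrite big_ord_recr /= IH h addrA subrK.
Qed.

Lemma KB_char (x y : H) : in_ellip x -> in_ellip y ->
  KB_to A B C D x y (Tm A C x 0 *m mxadj (Tm A C y 0)) /\
  forall Kk, KB_to A B C D x y Kk -> Kk = Tm A C x 0 *m mxadj (Tm A C y 0).
Proof.
move=> /Pm_geom [Kx [sx [hK0 hs0 hs1 hP]]] /Pm_geom [Ky [sy [gK0 gs0 gs1 gP]]].
have Trx := T_rec hU hK0 hs0 hs1 hP; have Try := T_rec hU gK0 gs0 gs1 gP.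
have Fx := F_sum hU hK0 hs0 hs1 hP; have Fy := F_sum hU gK0 gs0 gs1 gP.
have T0x := T_to0 hU hK0 hs0 hs1 hP; have T0y := T_to0 hU gK0 gs0 gs1 gP.
have hs : mx_sum_to (fun n => (Pm n x * qconj (Pm n y))%:M -
     Fm A B C D x n *m mxadj (Fm A B C D y n)) (Tm A C x 0 *m mxadj (Tm A C y 0)).
  apply/mx_sum_toE.
  apply: (@mxcvg_ext _ _ _ (fun K => Tm A C x 0 *m mxadj (Tm A C y 0) -
     Tm A C x K *m mxadj (Tm A C y K))).
    move=> K; rewrite (kern_sum (Tx := Tm A C x) (Ty := Tm A C y) (kt := fun n =>
      (Pm n x * qconj (Pm n y))%:M - Fm A B C D x n *m mxadj (Fm A B C D y n))) // => n.
    by apply: (kern_step (px := fun n => Pm n x) (py := fun n => Pm n y)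
      (Fx := Fm A B C D x) (Fy := Fm A B C D y)); [exact: Trx | by [] | exact: Try | by []].
  have := mxcvg_sub (mxcvg_cst (Tm A C x 0 *m mxadj (Tm A C y 0)))
    (mxcvg_mul T0x (mxcvg_adj T0y)).
  by rewrite mxadj0 mul0mx subr0.
split; first by exists (Fm A B C D x), (Fm A B C D y).
move=> Kk [F [G [hF hG hK]]].
have eF : F = Fm A B C D x by apply/funext => n; apply: mx_sum_unique (hF n) (Fx n).
have eG : G = Fm A B C D y by apply/funext => n; apply: mx_sum_unique (hG n) (Fy n).
by rewrite eF eG in hK; apply: mx_sum_unique hK hs.
Qed.

End K2.

Lemma near_oo_ex (P : nat -> Prop) :
  (\forall n \near \oo, P n) -> exists N, forall n, (N <= n)%N -> P n.
Proof. by case=> N _ hN; exists N => n hn; apply: hN. Qed.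
Lemma ex_near_oo (P : nat -> Prop) :
  (exists N, forall n, (N <= n)%N -> P n) -> \forall n \near \oo, P n.
Proof. by case=> N hN; exists N => // n hn; apply: hN. Qed.

Section Aux.
Variable R : realType.
Local Notation H := (quat R).

Lemma sum_rev (f : nat -> R) n : \sum_(j < n) f (n - j.+1)%N = \sum_(j < n) f j.
Proof. by rewrite -[RHS](big_mkord xpredT) big_rev_mkord subn0. Qed.

Lemma qN_add2 (p q : H) : qN (p + q) <= 2 * (qN p + qN q).
Proof.
have e : qN (p + q) + qN (p - q) = 2 * (qN p + qN q).
  by case: p q => [a b c d] [e f g h]; rewrite /qN !qaddE !qoppE /=; ring.
by rewrite -e lerDl qN_ge0.
Qed.

Lemma rsum_cvg I (s : seq I) (P : pred I) (F : I -> nat -> R) (L : I -> R) :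
  (forall i, P i -> F i @ \oo --> L i) ->
  (fun K => \sum_(i <- s | P i) F i K) @ \oo --> \sum_(i <- s | P i) L i.
Proof.
move=> h; elim: s => [|i s IH].
  by under eq_fun do rewrite big_nil; rewrite big_nil; apply: cvg_cst.
under eq_fun do rewrite big_cons; rewrite big_cons.
by case: ifP => Pi //; apply: cvgD => //; apply: h.
Qed.

Lemma sqrt_cvg0 (v : nat -> R) : (forall n, 0 <= v n) -> v @ \oo --> 0 ->
  (fun n => Num.sqrt (v n)) @ \oo --> 0.
Proof.
move=> v0 hv; apply/cvgr0Pnorm_le => e e0.
have e20 : 0 < e ^+ 2 by rewrite exprn_gt0.
near=> n; rewrite ger0_norm ?sqrtr_ge0 //.
rewrite -(ger0_norm (ltW e0)) -sqrtr_sqr ler_sqrt ?sqr_ge0 //.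
rewrite -(ger0_norm (v0 n)); near: n; exact: cvgr0_norm_le.
Unshelve. all: by end_near. Qed.

End Aux.

Lemma zid (V : zmodType) (X a t d b : V) : X - (a + t) + (a + d) = X + (d + b) - (t + b).
Proof.
have L1 : X - (a + t) + (a + d) = X - t + d by rewrite [a + t]addrC opprD (addrA X) subrKA.
have R1 : X + (d + b) - (t + b) = X - t + d by rewrite (addrA X) [t + b]addrC addrKA addrAC.
by rewrite L1 R1.
Qed.

Lemma H2_sum_entry (R : realType) r (v : nat -> 'cV[quat R]_r) K :
  (\sum_(k < K) mxadj (v k) *m v k) 0 0 = qR (psum (fun k => nv (v k)) K).
Proof.
rewrite summxE /psum qR_sum; apply: eq_bigr => k _; exact: adj_mul_self.
Qed.

Lemma H2_of_psum (R : realType) r (v : nat -> 'cV[quat R]_r) s :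
  psum (fun k => nv (v k)) @ \oo --> s -> H2_norm2_to v s.
Proof.
move=> h i j; rewrite (ord1 i) (ord1 j) mxE eqxx mulr1n.
apply: qcvg_ext (qcvg_R h) => K; by rewrite H2_sum_entry.
Qed.

Lemma psum_of_H2 (R : realType) r (v : nat -> 'cV[quat R]_r) s :
  H2_norm2_to v s -> psum (fun k => nv (v k)) @ \oo --> s.
Proof.
move=> h; have [h0 _ _ _] := h 0 0; move: h0; rewrite mxE eqxx mulr1n /=.
by under eq_fun do rewrite H2_sum_entry.
Qed.

Section P1.
Variable R : realType.
Local Notation H := (quat R).
Variables (N r : nat) (A : 'M[H]_N) (B : 'M[H]_(N, r)) (C : 'M[H]_(r, N)) (D : 'M[H]_r).
Hypothesis hU : unitary (block_mx A B C D).
Variables (u : nat -> 'cV[H]_r) (su : R).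
Hypothesis hu : psum (fun k => nv (u k)) @ \oo --> su.

Definition xs (k : nat) : 'cV[H]_N := \sum_(j < k) A ^+ j *m B *m u (k - j.+1)%N.
Definition ws (k : nat) : 'cV[H]_r := C *m xs k + D *m u k.

Lemma xs0 : xs 0 = 0. Proof. by rewrite /xs big_ord0. Qed.

Lemma xsS k : xs k.+1 = A *m xs k + B *m u k.
Proof.
rewrite /xs big_ord_recl /= expr0 mul1mx subn1 /= addrC mulmx_sumr; congr (_ + _).
apply: eq_bigr => j _; rewrite /= exprS -mulmxE !mulmxA.
by rewrite /bump /= add1n subSS.
Qed.

Lemma state_step k : col_mx (xs k.+1) (ws k) = block_mx A B C D *m col_mx (xs k) (u k).
Proof. by rewrite mul_block_col xsS. Qed.

Lemma nv_step k : nv (xs k.+1) + nv (ws k) = nv (xs k) + nv (u k).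
Proof.
rewrite -!nv_col state_step nv_isom //; by case: hU.
Qed.

Lemma sum_w K : \sum_(k < K) nv (ws k) = \sum_(k < K) nv (u k) - nv (xs K).
Proof.
elim: K => [|K IH]; first by rewrite !big_ord0 xs0 /nv big1 ?subrr // => i _; rewrite mxE qN0.
rewrite !big_ord_recr /= IH.
have := nv_step K; lra.
Qed.

Lemma nvu_ge0 k : 0 <= nv (u k). Proof. exact: nv_ge0. Qed.

Lemma psum_u_le K : psum (fun k => nv (u k)) K <= su.
Proof.
have hc : cvgn (psum (fun k => nv (u k))) by apply/cvg_ex; exists su.
rewrite -(cvg_lim _ hu) //; apply: nondecreasing_cvgn_le => //.
exact: psum_nd nvu_ge0.
Qed.

Section Coord.
Variable i : 'I_N.
Let a j := rown (A ^+ j *m B) i.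
Let b n := nv (u n).

Lemma xs_coord K : xs K i 0 = \sum_(j < K) ((A ^+ j *m B) *m u (K - j.+1)%N) i 0.
Proof. by rewrite /xs summxE. Qed.

Lemma qN_term K j : qN (((A ^+ j *m B) *m u K) i 0) <= a j * b K.
Proof.
rewrite mxE; apply: qN_sum_le => l _; rewrite ?qN_ge0 ?qNM //.
Qed.

Lemma xs_bound L M : qN (xs (L + M) i 0) <=
  2 * ((\sum_(j < L) a j) * (\sum_(j < L) b (M + j)%N) +
       (\sum_(j < M) a (L + j)%N) * (\sum_(j < M) b j)).
Proof.
rewrite xs_coord big_split_ord /=.
apply: le_trans (qN_add2 _ _) _; rewrite ler_pM2l // lerD //.
  apply: le_trans.
    apply: (@qN_sum_le _ _ _ _ _ (fun j : 'I_L => a j)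
                      (fun j : 'I_L => b (L + M - j.+1)%N)) => j _.
    - exact: rown_ge0.
    - exact: nv_ge0.
    - exact: qN_term.
  apply: ler_wpM2l; first by apply: sumr_ge0 => j _; apply: rown_ge0.
  rewrite -(sum_rev (fun k => b (M + k)%N)) le_eqVlt; apply/orP; left; apply/eqP.
  apply: eq_bigr => j _; congr b; have := ltn_ord j; lia.
apply: le_trans.
  apply: (@qN_sum_le _ _ _ _ _ (fun j : 'I_M => a (L + j)%N)
                    (fun j : 'I_M => b (M - j.+1)%N)) => j _.
  - exact: rown_ge0.
  - exact: nv_ge0.
  - have -> : (L + M - (L + j).+1 = M - j.+1)%N by lia.
    exact: qN_term.
apply: ler_wpM2l; first by apply: sumr_ge0 => j _; apply: rown_ge0.
by rewrite (sum_rev b).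
Qed.

End Coord.

Lemma xs_coord_to0 i : (fun K => qN (xs K i 0)) @ \oo --> 0.
Proof.
pose a j := rown (A ^+ j *m B) i; pose b n := nv (u n).
have a0 j : 0 <= a j by apply: rown_ge0.
have hA J : psum a J <= 1 by apply: (sum_rown_AB hU).
have ca : cvgn (psum a) := psum_cvg a0 hA.
set LA := limn (psum a).
have haL L : psum a L <= LA := nondecreasing_cvgn_le (psum_nd a0) ca L.
have hsplit f L M : psum f (L + M) = psum f L + \sum_(j < M) f (L + j)%N.
  by rewrite /psum big_split_ord.
have su0 : 0 <= su by have := psum_u_le 0; rewrite /psum big_ord0.
have bnd L M : qN (xs (L + M) i 0) <= 2 * ((su - psum b M) + (LA - psum a L) * su).
  apply: le_trans (xs_bound i L M) _.
  rewrite ler_pM2l // lerD //.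
    rewrite -[X in _ <= X]mul1r; apply: ler_pM.
    - by apply: sumr_ge0 => j _; apply: rown_ge0.
    - by apply: sumr_ge0 => j _; apply: nv_ge0.
    - exact: hA.
    - have := psum_u_le (M + L); rewrite hsplit /psum.
      by rewrite -/(psum b M) => h; rewrite lerBrDl.
  apply: ler_pM.
  - by apply: sumr_ge0 => j _; apply: rown_ge0.
  - by apply: sumr_ge0 => j _; apply: nv_ge0.
  - have := haL (L + M)%N; rewrite hsplit => h; rewrite lerBrDl; exact: h.
  - exact: (psum_u_le M).
apply/cvgr0Pnorm_le => e e0.
pose e1 := e / 4 / (su + 1).
have e10 : 0 < e1 by rewrite /e1 !divr_gt0 //; lra.
have [L hL] := near_oo_ex (proj1 (cvgrPdist_le (psum a) LA) ca e1 e10).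
have e40 : 0 < e / 4 by rewrite divr_gt0.
have [M0 hM] := near_oo_ex (proj1 (cvgrPdist_le _ su) hu (e / 4) e40).
apply: ex_near_oo; exists (L + M0)%N => K hK /=.
have eK : K = (L + (K - L))%N by lia.
have := bnd L (K - L)%N; rewrite -eK => hb.
rewrite ger0_norm ?qN_ge0 //; apply: le_trans hb _.
have h1 : su - psum b (K - L)%N <= e / 4.
  apply: le_trans (ler_norm _) (hM _ _); lia.
have h2 : LA - psum a L <= e1 := le_trans (ler_norm _) (hL L (leqnn L)).
have h3 : (LA - psum a L) * su <= e / 4.
  apply: le_trans (ler_wpM2r su0 h2) _.
  rewrite /e1 mulrAC ler_pdivrMr; last lra.
  nra.
lra.
Qed.

Lemma nv_xs_to0 : (fun K => nv (xs K)) @ \oo --> 0.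
Proof.
have h := @rsum_cvg R 'I_N (index_enum 'I_N) xpredT (fun i K => qN (xs K i 0))
  (fun _ => 0) (fun i _ => xs_coord_to0 i).
rewrite big1 // in h.
Qed.

Lemma xs_to0 : mxcvg xs 0.
Proof.
move=> i j; rewrite (ord1 j) mxE.
apply: (@qcvg_of_dist _ _ _ (fun K => Num.sqrt (qN (xs K i 0)))).
  by move=> K; rewrite subr0.
apply: sqrt_cvg0; [by move=> n; apply: qN_ge0 | exact: xs_coord_to0].
Qed.

Lemma ws_H2 : H2_norm2_to ws su.
Proof.
apply: H2_of_psum.
have -> : psum (fun k => nv (ws k)) = fun K => psum (fun k => nv (u k)) K - nv (xs K).
  by apply/funext => K; rewrite /psum sum_w.
have := cvgB hu nv_xs_to0; rewrite subr0; exact.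
Qed.

Section VP.
Variables (x : H) (Kx s : R).
Hypotheses (hK0 : 0 <= Kx) (hs0 : 0 <= s) (hs1 : s < 1)
  (hP : forall m, qn (Pm m x) <= Kx * s ^+ m).

Lemma vid K : \sum_(k < K) Pm k x *: ws k = \sum_(k < K) Fm A B C D x k *m u k - Tm A C x K *m xs K.
Proof.
elim: K => [|K IH]; first by rewrite !big_ord0 xs0 mulmx0 subr0.
rewrite !big_ord_recr /= IH.
rewrite (T_rec hU hK0 hs0 hs1 hP K) xsS /Fm /ws.
rewrite !mulmxDl !mulmxDr !scalerDr -!scalemxAl !mulmxA.
exact: zid.
Qed.

Let cF := Kx * mxb D + N%:R * (Kx * (1 - s)^-1) * mxb B.

Lemma F_bound k a c : qn (Fm A B C D x k a c) <= cF * s ^+ k.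
Proof.
rewrite /Fm mxE; apply: le_trans (qnD _ _) _.
rewrite /cF mulrDl; apply: lerD.
  rewrite mxE qnM mulrAC; apply: ler_pM; rewrite ?qn_ge0 ?qn_le_mxb //.
apply: le_trans (qn_mul_entry _ _ _ _) _.
apply: (@le_trans _ _ (\sum_(l < N) Kx * s ^+ k * (1 - s)^-1 * mxb B)).
  apply: ler_sum => l _; apply: ler_pM; rewrite ?qn_ge0 ?qn_le_mxb //.
  apply: le_trans (proj2 (T_sum hU hK0 hs0 hs1 hP k.+1) a l) _.
  rewrite exprS; apply: ler_wpM2r; first by rewrite invr_ge0 subr_ge0 ltW.
  apply: ler_wpM2l => //; rewrite -[X in _ <= X]mul1r; apply: ler_wpM2r.
    exact: exprn_ge0.
  by apply: ltW.
rewrite sumr_const card_ord -(mulr_natl (Kx * s ^+ k * (1 - s)^-1 * mxb B) N).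
rewrite le_eqVlt; apply/orP; left; apply/eqP; ring.
Qed.

End VP.

End P1.

Section Fin.
Variable R : realType.
Local Notation H := (quat R).
Variables (N r : nat) (A : 'M[H]_N) (B : 'M[H]_(N, r)) (C : 'M[H]_(r, N)) (D : 'M[H]_r).
Hypothesis hU : unitary (block_mx A B C D).

Lemma part1_x (u : nat -> 'cV[H]_r) (su : R) (hu : psum (fun k => nv (u k)) @ \oo --> su)
  (x : H) (Kx s : R) (hK0 : 0 <= Kx) (hs0 : 0 <= s) (hs1 : s < 1)
  (hP : forall m, qn (Pm m x) <= Kx * s ^+ m) :
  exists v : 'cV[H]_r,
    mx_sum_to (fun n => Fm A B C D x n *m u n) v /\
    mx_sum_to (fun k => Pm k x *: ws A B C D u k) v.
Proof.
set cF := Kx * mxb D + N%:R * (Kx * (1 - s)^-1) * mxb B.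
have cF0 : 0 <= cF.
  rewrite /cF addr_ge0 ?mulr_ge0 ?mxb_ge0 ?invr_ge0 ?subr_ge0 ?ler0n //; exact: ltW.
have su0 : 0 <= su by have := psum_u_le hu 0; rewrite /psum big_ord0.
have hub k l : qn (u k l 0) <= Num.sqrt su.
  apply: (@le_trans _ _ (Num.sqrt (nv (u k)))).
    by rewrite ler_sqrt ?nv_ge0 // qN_le_nv.
  rewrite ler_sqrt //; apply: le_trans (psum_u_le hu k.+1).
  rewrite /psum big_ord_recr /= lerDr; apply: sumr_ge0 => j _; exact: nv_ge0.
have hb1 : forall k (a : 'I_r) (c : 'I_1),
    qn ((Fm A B C D x k *m u k) a c) <= r%:R * cF * Num.sqrt su * s ^+ k.
  move=> k a c; apply: le_trans (qn_mul_entry _ _ _ _) _.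
  apply: (@le_trans _ _ (\sum_(l < r) cF * s ^+ k * Num.sqrt su)).
    apply: ler_sum => l _; apply: ler_pM; rewrite ?qn_ge0 //.
      exact: (F_bound hU hK0 hs0 hs1 hP).
    by rewrite (ord1 c); exact: hub.
  rewrite sumr_const card_ord -(mulr_natl (cF * s ^+ k * Num.sqrt su) r).
  rewrite le_eqVlt; apply/orP; left; apply/eqP; ring.
have hb2 : forall K, psum (fun k => r%:R * cF * Num.sqrt su * s ^+ k) K <=
    r%:R * cF * Num.sqrt su * (1 - s)^-1.
  move=> K; rewrite /psum -mulr_sumr ler_wpM2l ?mulr_ge0 ?sqrtr_ge0 ?ler0n //.
  by apply: geo_sum_le; rewrite hs0 hs1.
have [hV _] := mx_sum_abs hb1 hb2.
exists (mxlimS (fun n => Fm A B C D x n *m u n)); split => //.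
apply/mx_sum_toE.
apply: (@mxcvg_ext _ _ _ (fun K => \sum_(k < K) Fm A B C D x k *m u k -
    Tm A C x K *m xs A B u K)).
  by move=> K; rewrite (vid hU u hK0 hs0 hs1 hP K).
have := mxcvg_sub hV (mxcvg_mul (T_to0 hU hK0 hs0 hs1 hP) (xs_to0 hU hu)).
by rewrite mul0mx subr0.
Qed.

End Fin.

Local Close Scope classical_set_scope.

Theorem mainTheorem18 (R : realType) (N r : nat)
  (A : 'M[quat R]_N) (B : 'M[quat R]_(N, r))
  (C : 'M[quat R]_(r, N)) (D : 'M[quat R]_r) :
  unitary (block_mx A B C D) ->
  (* M_B is an isometry of (H_2(E))^r into itself *)
  (forall u : nat -> 'cV[quat R]_r, in_H2 u ->
     exists w : nat -> 'cV[quat R]_r,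
       (exists s : R, H2_norm2_to u s /\ H2_norm2_to w s) /\
       forall x : quat R, in_ellip x ->
         exists (F : nat -> 'M[quat R]_r) (v : 'cV[quat R]_r),
           [/\ forall n, PodotB_to A B C D n x (F n),
               mx_sum_to (fun n => F n *m u n) v &
               mx_sum_to (fun k => Pm k x *: w k) v]) /\
  (* the kernel K_B is well defined on E x E *)
  (forall x y : quat R, in_ellip x -> in_ellip y -> exists K, KB_to A B C D x y K) /\
  (* H(B) is finite dimensional: all kernel sections K_B(., y) c lie in a
     finitely generated right H-module of functions on E *)
  (exists (m : nat) (g : 'I_m -> quat R -> 'cV[quat R]_r),
     forall (y : quat R) (c : 'cV[quat R]_r), in_ellip y ->
       exists q : 'I_m -> quat R,
         forall (x : quat R) (K : 'M[quat R]_r), in_ellip x -> KB_to A B C D x y K ->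
           K *m c = \sum_(i < m) g i x *m (q i)%:M).
Proof.
move=> hU; split; [|split].
- move=> u [su hsu]; have hu := psum_of_H2 hsu.
  exists (ws A B C D u); split; first by exists su; split; [exact: hsu | exact: (ws_H2 hU hu)].
  move=> x /Pm_geom [Kx [s [hK0 hs0 hs1 hP]]].
  have [v [h1 h2]] := part1_x hU hu hK0 hs0 hs1 hP.
  exists (Fm A B C D x), v; split; [exact: (F_sum hU hK0 hs0 hs1 hP) | exact: h1 | exact: h2].
- move=> x y hx hy; exists (Tm A C x 0 *m mxadj (Tm A C y 0)).
  exact: (proj1 (KB_char hU hx hy)).
- exists N, (fun i z => col i (Tm A C z 0)) => y c hy.
  exists (fun i => (mxadj (Tm A C y 0) *m c) i 0) => x K hx hK.
  rewrite (proj2 (KB_char hU hx hy) K hK) -mulmxA.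
  exact: mul_col_sum.
Qed.
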